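(* Let $A$ be a left counital bialgebra. Then $\Delta_T$ is coassociative: $(\mathrm{id}\otimes\Delta_T)\Delta_T=(\Delta_T\otimes\mathrm{id})\Delta_T$ on $Ш(A)$.
   Context: Throughout, $\mathbf{k}$ is a commutative unital ring, all algebras are unital commutative $\mathbf{k}$-algebras, tensor products are over $\mathbf{k}$. A left counital bialgebra $(H,m,\mu,\Delta,\varepsilon)$ is an algebra $H$ with algebra homomorphisms $\Delta:H\to H\otimes H$ (coassociative) and $\varepsilon:H\to\mathbf{k}$ satisfying left counicity $(\varepsilon\otimes\mathrm{id})\Delta=\beta_\ell$, where $\beta_\ell(u)=1\otimes u$; right counicity is not required. For an algebra $A$ with unit $1_A$, $Ш(A)=\bigoplus_{n\ge1}A^{\otimes n}$, $P_r(\mathfrak a)=1_A\otimes\mathfrak a$, and the product $\diamond$ is defined bilinearly on pure tensors $\mathfrak a=a_1\otimes\mathfrak a'\in A^{\otimes m}$, $\mathfrak b=b_1\otimes\mathfrak b'\in A^{\otimes n}$ by: $a_1b_1$ if $m=n=1$; $a_1b_1\otimes\mathfrak b'$ if $m=1,n\ge2$; $a_1b_1\otimes\mathfrak a'$ if $m\ge2,n=1$; $a_1b_1\otimes\big(\mathfrak a'\diamond(1_A\otimes\mathfrak b')+(1_A\otimes\mathfrak a')\diamond\mathfrak b'-1_A\otimes(\mathfrak a'\diamond\mathfrak b')\big)$ if $m,n\ge2$. $Ш(A)\otimes Ш(A)$ has the product $\bullet$, $(x\otimes y)\bullet(x'\otimes y')=(x\diamond x')\otimes(y\diamond y')$, and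 $A\otimes A\subseteq Ш(A)\otimes Ш(A)$ via $A=A^{\otimes1}$. When $A$ is a left counital bialgebra with coproduct $\Delta_A$, the linear map $\Delta_T:Ш(A)\to Ш(A)\otimes Ш(A)$ is defined on pure tensors by induction on tensor length: $\Delta_T(a)=\Delta_A(a)$ for $a\in A$, and for $\mathfrak a'\in A^{\otimes n}$, $\Delta_T(1_A\otimes\mathfrak a')=(\mathrm{id}\otimes P_r)\Delta_T(\mathfrak a')$ and $\Delta_T(a_1\otimes\mathfrak a')=\Delta_A(a_1)\bullet(\mathrm{id}\otimes P_r)\Delta_T(\mathfrak a')$. *)

(* Defs.v *)
From HB Require Import structures.
From mathcomp Require Import all_boot all_order all_algebra.
Set Implicit Arguments. Unset Strict Implicit. Unset Printing Implicit Defensive.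
Import GRing.Theory.
Local Open Scope ring_scope.

(* MathComp has no tensor products of modules, so we use the standard
   presentation: an element of a tensor product is a formal k-linear
   combination of pure tensors (a list of (coefficient, pure tensor) pairs),
   and two formal combinations are EQUAL in the tensor product iff they
   agree under every multilinear map into every k-module (universal property
   of the tensor product; taking the target to be the tensor product itself
   shows this is exactly equality in the quotient).

   Pure tensors are encoded as  seq (seq A) : a list of "words", each word
   a1 :: ... :: an standing for a1 (x) ... (x) an in A^{(x)n}.
   - an element of Sha(A) = (+)_{n>=1} A^{(x)n} is a 1-word tensor,
   - Sha(A) (x) Sha(A) = (+)_{m,n} A^{(x)m} (x) A^{(x)n} : 2-word tensors,
   - Sha(A)^{(x)3} : 3-word tensors,
   - A (x) A, A (x) A (x) A : 2 / 3 singleton-word tensors.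
   A map is "multilinear" if it is k-linear in every letter of every word
   (the shape of the word list being fixed), which is the universal property
   of the direct sum over all shapes of these tensor powers of A.
   ------------------------------------------------------------------------ *)

Definition fsum (k : Type) (T : Type) := seq (k * T).

Definition fscale (k : pzRingType) T (c : k) (x : fsum k T) : fsum k T :=
  [seq (c * p.1, p.2) | p <- x].

Definition feval (k : pzRingType) (P : lmodType k) T (f : T -> P)
    (x : fsum k T) : P :=
  \sum_(p <- x) p.1 *: f p.2.

Definition multilinear (k : pzRingType) (A : lmodType k) (P : lmodType k)
    (f : seq (seq A) -> P) : Prop :=
  forall (ws1 ws2 : seq (seq A)) (u v : seq A) (c : k) (a b : A),
    f (ws1 ++ (u ++ (c *: a + b) :: v) :: ws2)
    = c *: f (ws1 ++ (u ++ a :: v) :: ws2) + f (ws1 ++ (u ++ b :: v) :: ws2).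

Definition teq (k : pzRingType) (A : lmodType k)
    (x y : fsum k (seq (seq A))) : Prop :=
  forall (P : lmodType k) (f : seq (seq A) -> P),
    multilinear f -> feval f x = feval f y.

Section Defs.
Variables (k : comPzRingType) (A : comAlgType k).

Notation tens := (fsum k (seq (seq A))).

Definition tw2 (x : fsum k (A * A)) : tens :=
  [seq (p.1, [:: [:: p.2.1]; [:: p.2.2]]) | p <- x].

Definition mulAA (x y : fsum k (A * A)) : fsum k (A * A) :=
  [seq (p.1 * q.1, (p.2.1 * q.2.1, p.2.2 * q.2.2)) | p <- x, q <- y].

Definition coassA_l (D : A -> fsum k (A * A)) (a : A) : tens :=
  flatten [seq [seq (p.1 * q.1, [:: [:: p.2.1]; [:: q.2.1]; [:: q.2.2]])
               | q <- D p.2.2] | p <- D a].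
Definition coassA_r (D : A -> fsum k (A * A)) (a : A) : tens :=
  flatten [seq [seq (p.1 * q.1, [:: [:: q.2.1]; [:: q.2.2]; [:: p.2.2]])
               | q <- D p.2.1] | p <- D a].

Record left_counital_bialgebra (eps : A -> k) (D : A -> fsum k (A * A))
  : Prop := {
  eps_lin : forall (c : k) (a b : A), eps (c *: a + b) = c * eps a + eps b;
  eps_one : eps 1 = 1;
  eps_mul : forall a b : A, eps (a * b) = eps a * eps b;
  D_lin : forall (c : k) (a b : A),
      teq (tw2 (D (c *: a + b))) (fscale c (tw2 (D a)) ++ tw2 (D b));
  D_one : teq (tw2 (D 1)) (tw2 [:: (1, (1, 1))]);
  D_mul : forall a b : A, teq (tw2 (D (a * b))) (tw2 (mulAA (D a) (D b)));
  D_coass : forall a : A, teq (coassA_l D a) (coassA_r D a);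
  (* left counicity (eps (x) id) D = beta_l, via k (x) A = A *)
  D_lcounit : forall u : A, \sum_(p <- D u) (p.1 * eps p.2.1) *: p.2.2 = u
}.

Definition prepend (a : A) (x : fsum k (seq A)) : fsum k (seq A) :=
  [seq (p.1, a :: p.2) | p <- x].

(* the product  <>  on pure tensors; the fuel is size a + size b, which
   decreases by one at each recursive call *)
Fixpoint diamond_fuel (n : nat) (a b : seq A) : fsum k (seq A) :=
  match n with
  | 0 => [::]
  | n'.+1 =>
    match a, b with
    | [:: a1], [:: b1] => [:: (1, [:: a1 * b1])]
    | [:: a1], b1 :: b' => [:: (1, a1 * b1 :: b')]
    | a1 :: a', [:: b1] => [:: (1, a1 * b1 :: a')]
    | a1 :: a', b1 :: b' =>
        prepend (a1 * b1)
          (diamond_fuel n' a' (1 :: b') ++ diamond_fuel n' (1 :: a') b'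
           ++ fscale (-1) (prepend 1 (diamond_fuel n' a' b')))
    | _, _ => [::]
    end
  end.

Definition diamond (a b : seq A) : fsum k (seq A) :=
  diamond_fuel (size a + size b) a b.

Definition bullet (x y : tens) : tens :=
  flatten [seq
    match p.2, q.2 with
    | [:: u; v], [:: u'; v'] =>
        [seq (p.1 * q.1 * r.1 * s.1, [:: r.2; s.2])
        | r <- diamond u u', s <- diamond v v']
    | _, _ => [::]
    end | p <- x, q <- y].

Definition idPr (x : tens) : tens :=
  [seq (p.1, match p.2 with
             | [:: u; v] => [:: u; 1 :: v]
             | ws => ws
             end) | p <- x].

Variable D : A -> fsum k (A * A).

Fixpoint DeltaT (w : seq A) : tens :=
  match w with
  | [::] => [::]
  | [:: a] => tw2 (D a)
  | a :: w' => if a == 1 then idPr (DeltaT w')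
               else bullet (tw2 (D a)) (idPr (DeltaT w'))
  end.

Definition DeltaTS (x : fsum k (seq A)) : tens :=
  flatten [seq fscale p.1 (DeltaT p.2) | p <- x].

Definition id_DeltaT (x : tens) : tens :=
  flatten [seq match p.2 with
               | [:: u; v] => [seq (p.1 * q.1, u :: q.2) | q <- DeltaT v]
               | _ => [::]
               end | p <- x].
Definition DeltaT_id (x : tens) : tens :=
  flatten [seq match p.2 with
               | [:: u; v] => [seq (p.1 * q.1, rcons q.2 v) | q <- DeltaT u]
               | _ => [::]
               end | p <- x].

End Defs.

(* Main.v *)
Require Import Defs.
From HB Require Import structures.
From mathcomp Require Import all_boot all_order all_algebra.
Set Implicit Arguments. Unset Strict Implicit. Unset Printing Implicit Defensive.
Import GRing.Theory.
Local Open Scope ring_scope.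

Fixpoint Dl (k : comPzRingType) (A : comAlgType k) (D : A -> fsum k (A * A))
  (w : seq A) : seq (k * (A * seq A)) :=
  match w with
  | [::] => [::]
  | [:: a] => [seq (p.1, (p.2.1, [:: p.2.2])) | p <- D a]
  | a :: w' => if a == 1 then [seq (q.1, (q.2.1, 1 :: q.2.2)) | q <- Dl D w']
     else [seq (p.1 * q.1 * 1 * 1, (p.2.1 * q.2.1, p.2.2 * 1 :: q.2.2)) | p <- D a, q <- Dl D w']
  end.

Definition emb (k : comPzRingType) (A : comAlgType k) (l : seq (k * (A * seq A)))
  : fsum k (seq (seq A)) := [seq (q.1, [:: [:: q.2.1]; q.2.2]) | q <- l].

Lemma diamond_single (k : comPzRingType) (A : comAlgType k) (x y : A) (u : seq A) :
  diamond [:: x] (y :: u) = [:: (1, x * y :: u)].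
Proof. by case: u. Qed.

Lemma flatten_single (T U : Type) (g : T -> U) (s : seq T) :
  flatten [seq [:: g q] | q <- s] = map g s.
Proof. by elim: s => //= q s ->. Qed.

Lemma bullet_emb (k : comPzRingType) (A : comAlgType k) (X : seq (k * (A * A))) L :
  bullet (tw2 X) (idPr (emb L)) =
  emb [seq (p.1 * q.1 * 1 * 1, (p.2.1 * q.2.1, p.2.2 * 1 :: q.2.2)) | p <- X, q <- L].
Proof.
rewrite /bullet /tw2 /idPr /emb.
elim: X => [|p X IHX] //.
rewrite /= flatten_cat IHX map_cat; congr cat.
rewrite -!map_comp -[RHS]flatten_single; congr flatten.
apply: eq_map => q /=.
by rewrite !diamond_single.
Qed.

Lemma DeltaT_emb (k : comPzRingType) (A : comAlgType k) (D : A -> fsum k (A * A)) w :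
  DeltaT D w = emb (Dl D w).
Proof.
elim: w => [|a w IH] //.
case: w IH => [|b w] IH; first by rewrite /= /tw2 /emb -map_comp.
have -> : DeltaT D (a :: b :: w) = if a == 1 then idPr (DeltaT D (b::w))
   else bullet (tw2 (D a)) (idPr (DeltaT D (b::w))) by [].
have -> : Dl D (a :: b :: w) = if a == 1 then [seq (q.1, (q.2.1, 1 :: q.2.2)) | q <- Dl D (b::w)]
     else [seq (p.1 * q.1 * 1 * 1, (p.2.1 * q.2.1, p.2.2 * 1 :: q.2.2)) | p <- D a, q <- Dl D (b::w)] by [].
rewrite IH; case: (a == 1); last exact: bullet_emb.
by rewrite /idPr /emb -!map_comp.
Qed.
Definition mkF (k : comPzRingType) (A : comAlgType k) (P : lmodType k) (n : nat)
  (H : seq A -> P) (ws : seq (seq A)) : P :=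
  if shape ws == nseq n 1%N then H (map (head 0) ws) else 0.

Lemma mkF_multi (k : comPzRingType) (A : comAlgType k) (P : lmodType k) (n : nat)
  (H : seq A -> P) :
  (forall s1 s2 c a b, (size s1 + size s2).+1 = n ->
     H (s1 ++ (c *: a + b) :: s2) = c *: H (s1 ++ a :: s2) + H (s1 ++ b :: s2)) ->
  multilinear (mkF n H).
Proof.
move=> HH ws1 ws2 u v c a b; rewrite /mkF.
have Es : forall z z', shape (ws1 ++ (u ++ z :: v) :: ws2) = shape (ws1 ++ (u ++ z' :: v) :: ws2).
  by move=> z z'; rewrite /shape !map_cat /= !size_cat.
rewrite -(Es (c *: a + b) a) -(Es (c *: a + b) b).
case: ifP => [/eqP Hs|_]; last by rewrite scaler0 addr0.
have Hu : size (u ++ (c *: a + b) :: v) = 1%N.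
  have : size (u ++ (c *: a + b) :: v) \in nseq n 1%N.
    rewrite -Hs /shape map_cat mem_cat; apply/orP; right; exact: mem_head.
  by rewrite mem_nseq => /andP [_ /eqP].
move/eqP: Hu; rewrite size_cat /= addnS eqSS addn_eq0 !size_eq0 => /andP [/eqP Eu /eqP Ev].
move: Hs; rewrite Eu Ev /= !map_cat /= => Hs; apply: HH.
move: Hs => /(congr1 size); rewrite /shape size_map size_nseq size_cat /= !size_map.
by move=> <-; rewrite addnS.
Qed.

Section Main.
Variables (k : comPzRingType) (A : comAlgType k) (eps : A -> k) (D : A -> fsum k (A * A)).
Hypothesis HB : left_counital_bialgebra eps D.
Variable P : lmodType k.

Definition S (g : A -> seq A -> P) (w : seq A) : P :=
  \sum_(q <- Dl D w) q.1 *: g q.2.1 q.2.2.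

Definition good (g : A -> seq A -> P) :=
  (forall v c x y, g (c *: x + y) v = c *: g x v + g y v) /\
  (forall x u v c a b, g x (u ++ (c *: a + b) :: v) = c *: g x (u ++ a :: v) + g x (u ++ b :: v)).

Definition bilin (h : A -> A -> P) :=
  (forall y c x1 x2, h (c *: x1 + x2) y = c *: h x1 y + h x2 y) /\
  (forall x c y1 y2, h x (c *: y1 + y2) = c *: h x y1 + h x y2).

Definition trilin (h : A -> A -> A -> P) :=
  [/\ (forall y z c x1 x2, h (c *: x1 + x2) y z = c *: h x1 y z + h x2 y z),
      (forall x z c y1 y2, h x (c *: y1 + y2) z = c *: h x y1 z + h x y2 z) &
      (forall x y c z1 z2, h x y (c *: z1 + z2) = c *: h x y z1 + h x y z2)].

Definition mk2 (h : A -> A -> P) := mkF 2 (fun s => h (nth 0 s 0) (nth 0 s 1)).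
Definition mk3 (h : A -> A -> A -> P) :=
  mkF 3 (fun s => h (nth 0 s 0) (nth 0 s 1) (nth 0 s 2)).

Lemma mk2_multi h : bilin h -> multilinear (mk2 h).
Proof.
move=> [H1 H2]; apply: mkF_multi => s1 s2 c a b.
case: s1 => [|x1 [|? ?]]; case: s2 => [|y [|? ?]] => /eqP //= _; solve [exact: H1 | exact: H2].
Qed.

Lemma mk3_multi h : trilin h -> multilinear (mk3 h).
Proof.
move=> [H1 H2 H3]; apply: mkF_multi => s1 s2 c a b.
case: s1 => [|x1 [|x2 [|? ?]]]; case: s2 => [|y [|y2 [|? ?]]] => /eqP //= _; solve [exact: H1 | exact: H2 | exact: H3].
Qed.

Lemma sumZ_lin (T : Type) (X : seq (k * T)) (F1 F2 : T -> P) c :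
  \sum_(t <- X) t.1 *: (c *: F1 t.2 + F2 t.2) =
  c *: \sum_(t <- X) t.1 *: F1 t.2 + \sum_(t <- X) t.1 *: F2 t.2.
Proof.
rewrite scaler_sumr -big_split; apply: eq_bigr => t _.
by rewrite scalerDr !scalerA mulrC.
Qed.

Lemma feval_tw2 (f : seq (seq A) -> P) X :
  feval f (tw2 X) = \sum_(p <- X) p.1 *: f [:: [:: p.2.1]; [:: p.2.2]].
Proof. by rewrite /feval /tw2 big_map. Qed.

Lemma feval_mk2 h X : feval (mk2 h) (tw2 X) = \sum_(p <- X) p.1 *: h p.2.1 p.2.2.
Proof. by rewrite feval_tw2. Qed.

Lemma feval_cat (f : seq (seq A) -> P) x y : feval f (x ++ y) = feval f x + feval f y.
Proof. by rewrite /feval big_cat. Qed.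

Lemma feval_fscale (f : seq (seq A) -> P) c x : feval f (fscale c x) = c *: feval f x.
Proof.
rewrite /feval /fscale big_map scaler_sumr; apply: eq_bigr => p _.
by rewrite scalerA.
Qed.

Lemma D_linS h a1 a2 c : bilin h ->
  \sum_(p <- D (c *: a1 + a2)) p.1 *: h p.2.1 p.2.2 =
  c *: \sum_(p <- D a1) p.1 *: h p.2.1 p.2.2 + \sum_(p <- D a2) p.1 *: h p.2.1 p.2.2.
Proof.
move=> Hh; have := D_lin HB c a1 a2 (mk2_multi Hh).
by rewrite feval_cat feval_fscale !feval_mk2.
Qed.

Lemma D_oneS h : bilin h -> \sum_(p <- D 1) p.1 *: h p.2.1 p.2.2 = h 1 1.
Proof.
move=> Hh; have := D_one HB (mk2_multi Hh).
by rewrite !feval_mk2 big_cons big_nil scale1r addr0.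
Qed.

Lemma D_mulS h a b : bilin h -> \sum_(p <- D (a * b)) p.1 *: h p.2.1 p.2.2 =
  \sum_(p <- D a) p.1 *: \sum_(q <- D b) q.1 *: h (p.2.1 * q.2.1) (p.2.2 * q.2.2).
Proof.
move=> Hh; have := D_mul HB a b (mk2_multi Hh).
rewrite !feval_mk2 => ->; rewrite /mulAA big_allpairs_dep /=.
apply: eq_bigr => p _; rewrite scaler_sumr; apply: eq_bigr => q _.
by rewrite scalerA.
Qed.

Lemma D_coassS h a : trilin h ->
  \sum_(p <- D a) p.1 *: \sum_(q <- D p.2.2) q.1 *: h p.2.1 q.2.1 q.2.2 =
  \sum_(p <- D a) p.1 *: \sum_(q <- D p.2.1) q.1 *: h q.2.1 q.2.2 p.2.2.
Proof.
move=> Hh; have := D_coass HB a (mk3_multi Hh).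
rewrite /feval /coassA_l /coassA_r !big_flatten !big_map /=.
move=> E; rewrite -[LHS]/(\sum_(p <- D a) p.1 *: \sum_(q <- D p.2.2) q.1 *: h p.2.1 q.2.1 q.2.2).
have F : forall (s : seq (k * (A * A))) (G : k * (A * A) -> seq (k * (A * A))) (T : k * (A * A) -> k * (A * A) -> A * A * A),
  \sum_(p <- s) p.1 *: \sum_(q <- G p) q.1 *: h (T p q).1.1 (T p q).1.2 (T p q).2 =
  \sum_(p <- s) \sum_(i <- [seq (p.1 * q.1, [:: [:: (T p q).1.1]; [:: (T p q).1.2]; [:: (T p q).2]]) | q <- G p])
     i.1 *: mk3 h i.2.
  move=> s G T; apply: eq_bigr => p _; rewrite big_map scaler_sumr; apply: eq_bigr => q _.
  by rewrite scalerA.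
rewrite (F _ (fun p => D p.2.2) (fun p q => (p.2.1, q.2.1, q.2.2))) E.
by rewrite -(F _ (fun p => D p.2.1) (fun p q => (q.2.1, q.2.2, p.2.2))).
Qed.


Lemma S_ext g g' w : (forall x v, g x v = g' x v) -> S g w = S g' w.
Proof. by move=> E; apply: eq_bigr => q _; rewrite E. Qed.

Lemma S_ext_in g g' w : (forall q, q \in Dl D w -> g q.2.1 q.2.2 = g' q.2.1 q.2.2) ->
  S g w = S g' w.
Proof. by move=> E; apply: eq_big_seq => q Hq; rewrite E. Qed.

Lemma S_lin g1 g2 c w : S (fun x v => c *: g1 x v + g2 x v) w = c *: S g1 w + S g2 w.
Proof. exact: (sumZ_lin (Dl D w) (fun t => g1 t.1 t.2) (fun t => g2 t.1 t.2)). Qed.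

Lemma S_sum (T : Type) (R : seq (k * T)) G w :
  S (fun x v => \sum_(r <- R) r.1 *: G r.2 x v) w = \sum_(r <- R) r.1 *: S (G r.2) w.
Proof.
rewrite /S; under eq_bigr do rewrite scaler_sumr.
rewrite exchange_big; apply: eq_bigr => r _; rewrite scaler_sumr; apply: eq_bigr => q _.
by rewrite !scalerA mulrC.
Qed.

Lemma good_shift g y z : good g -> good (fun x v => g (y * x) (z :: v)).
Proof.
move=> [G1 G2]; split.
  by move=> v c x1 x2; rewrite mulrDr -scalerAr G1.
by move=> x u v c a b; exact: (G2 _ (z :: u)).
Qed.

Lemma Dl_cons a w : w != [::] -> Dl D (a :: w) =
  if a == 1 then [seq (q.1, (q.2.1, 1 :: q.2.2)) | q <- Dl D w]
  else [seq (p.1 * q.1 * 1 * 1, (p.2.1 * q.2.1, p.2.2 * 1 :: q.2.2)) | p <- D a, q <- Dl D w].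
Proof. by case: w. Qed.

Lemma S_single g a : S g [:: a] = \sum_(p <- D a) p.1 *: g p.2.1 [:: p.2.2].
Proof. by rewrite /S /= big_map. Qed.

Lemma StepSem g a w : w != [::] -> good g ->
  S g (a :: w) = \sum_(p <- D a) p.1 *: S (fun x v => g (p.2.1 * x) (p.2.2 :: v)) w.
Proof.
move=> Hw [G1 G2]; rewrite {1}/S (Dl_cons _ Hw).
case: eqP => [->|_].
  rewrite big_map /=.
  rewrite (D_oneS (h := fun al be => S (fun x v => g (al * x) (be :: v)) w)).
    by rewrite /S; apply: eq_bigr => q _; rewrite mul1r.
  split.
    move=> y c x1 x2; rewrite -S_lin; apply: S_ext => x v.
    by rewrite mulrDl -scalerAl G1.
  move=> x c y1 y2; rewrite -S_lin; apply: S_ext => x' v.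
  exact: (G2 _ [::]).
rewrite big_allpairs_dep /=; apply: eq_bigr => p _.
rewrite /S scaler_sumr; apply: eq_bigr => q _.
by rewrite !mulr1 scalerA.
Qed.

Lemma Dl_size w q : q \in Dl D w -> size q.2.2 = size w.
Proof.
elim: w q => [|a w IH] q //.
case: w IH => [|b w] IH.
  by rewrite /= => /mapP [p _ ->].
rewrite Dl_cons //; case: (a == 1).
  by move=> /mapP [r Hr ->] /=; rewrite (IH _ Hr).
by move=> /allpairsP [[p r] [_ Hr ->]] /=; rewrite (IH _ Hr).
Qed.

Lemma LinS u v g c a b : good g ->
  S g (u ++ (c *: a + b) :: v) = c *: S g (u ++ a :: v) + S g (u ++ b :: v).
Proof.
elim: u g => [|a0 u IH] g Hg /=.
  case: v => [|b0 v].
    rewrite !S_single; apply: (D_linS (h := fun al be => g al [:: be])); case: Hg => G1 G2; split.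
      by move=> y c' x1 x2; rewrite G1.
    by move=> x c' y1 y2; exact: (G2 _ [::] [::]).
  rewrite !StepSem //; apply: (D_linS (h := fun al be => S (fun x v' => g (al * x) (be :: v')) (b0 :: v))); case: Hg => G1 G2; split.
    move=> y c' x1 x2; rewrite -S_lin; apply: S_ext => x v'.
    by rewrite mulrDl -scalerAl G1.
  move=> x c' y1 y2; rewrite -S_lin; apply: S_ext => x' v'.
  exact: (G2 _ [::]).
have Hne : forall z, u ++ z :: v != [::] by move=> z; case: u {IH}.
rewrite !StepSem //.
set G := fun (p : A * A) x v' => g (p.1 * x) (p.2 :: v').
rewrite -(sumZ_lin (D a0) (fun p => S (G p) (u ++ a :: v)) (fun p => S (G p) (u ++ b :: v))).
apply: eq_bigr => p _.
by rewrite IH //; exact: good_shift.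
Qed.


Lemma sumZ_ext (T : Type) (X : seq (k * T)) (G F1 F2 : k * T -> P) c :
  (forall t, G t = c *: F1 t + F2 t) ->
  \sum_(t <- X) t.1 *: G t = c *: \sum_(t <- X) t.1 *: F1 t + \sum_(t <- X) t.1 *: F2 t.
Proof.
move=> E; rewrite scaler_sumr -big_split; apply: eq_bigr => t _.
by rewrite E scalerDr !scalerA mulrC.
Qed.

Lemma S_lin_ext g g1 g2 c w : (forall x v, g x v = c *: g1 x v + g2 x v) ->
  S g w = c *: S g1 w + S g2 w.
Proof. by move=> E; rewrite -S_lin; apply: S_ext. Qed.

Definition good3 (phi : A -> A -> seq A -> P) :=
  [/\ (forall y v c x1 x2, phi (c *: x1 + x2) y v = c *: phi x1 y v + phi x2 y v),
      (forall x v c y1 y2, phi x (c *: y1 + y2) v = c *: phi x y1 v + phi x y2 v) &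
      (forall x y u v c a b, phi x y (u ++ (c *: a + b) :: v) =
                             c *: phi x y (u ++ a :: v) + phi x y (u ++ b :: v))].

Definition Lr phi w := S (fun x v => S (fun y v' => phi x y v') v) w.
Definition Rr phi w := S (fun x v => \sum_(t <- D x) t.1 *: phi t.2.1 t.2.2 v) w.

Lemma good3_shift phi a1 a2 a3 : good3 phi ->
  good3 (fun x y v => phi (a1 * x) (a2 * y) (a3 :: v)).
Proof.
move=> [P1 P2 P3]; split.
- by move=> y v c x1 x2; rewrite mulrDr -scalerAr P1.
- by move=> x v c y1 y2; rewrite mulrDr -scalerAr P2.
- by move=> x y u v c a b; exact: (P3 _ _ (a3 :: u)).
Qed.

Lemma Main w phi : w != [::] -> good3 phi -> Lr phi w = Rr phi w.
Proof.
elim: w phi => [|a w IH] phi // _ Hphi; have [P1 P2 P3] := Hphi.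
case: w IH => [|b w] IH.
  rewrite /Lr /Rr !S_single.
  under eq_bigr do rewrite S_single.
  apply: (D_coassS (h := fun x y z => phi x y [:: z])); split.
  - by move=> *; apply: P1.
  - by move=> *; apply: P2.
  - by move=> x y c z1 z2; exact: (P3 x y [::] [::]).
set w' := b :: w; have Hw : w' != [::] by [].
have L1 : Lr phi (a :: w') = \sum_(p <- D a) p.1 *: \sum_(r <- D p.2.2)
    r.1 *: Lr (fun x y v => phi (p.2.1 * x) (r.2.1 * y) (r.2.2 :: v)) w'.
  rewrite /Lr StepSem //; last first.
    split.
      by move=> v c x1 x2; apply: S_lin_ext => y v'; apply: P1.
    by move=> x u v c a1 b1; apply: LinS; split; [apply: P2 | apply: P3].
  apply: eq_bigr => p _; congr (_ *: _).
  rewrite -(S_sum (D p.2.2) (fun r x v => S (fun y v' => phi (p.2.1 * x) (r.1 * y) (r.2 :: v')) v)).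
  apply: S_ext_in => -[c [x v]] Hq; have := Dl_size Hq; rewrite /=.
  case: v {Hq} => // y0 v0 _.
  by rewrite StepSem //.
have R1 : Rr phi (a :: w') = \sum_(p <- D a) p.1 *:
    S (fun x v => \sum_(t <- D (p.2.1 * x)) t.1 *: phi t.2.1 t.2.2 (p.2.2 :: v)) w'.
  rewrite /Rr StepSem //; split.
    move=> v c x1 x2; apply: (D_linS (h := fun al be => phi al be v)); split.
      by move=> *; apply: P1.
    by move=> *; apply: P2.
  by move=> x u v c a1 b1; apply: sumZ_ext => t; apply: P3.
rewrite L1 R1.
pose K al be ga := S (fun x v => \sum_(t <- D x) t.1 *: phi (al * t.2.1) (be * t.2.2) (ga :: v)) w'.
transitivity (\sum_(p <- D a) p.1 *: \sum_(r <- D p.2.2) r.1 *: K p.2.1 r.2.1 r.2.2).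
  apply: eq_bigr => p _; congr (_ *: _); apply: eq_bigr => r _; congr (_ *: _).
  by rewrite IH //; apply: good3_shift.
rewrite (D_coassS (h := K)); last first.
  split.
  - move=> y z c x1 x2; apply: S_lin_ext => x v; apply: sumZ_ext => t.
    by rewrite mulrDl -scalerAl P1.
  - move=> x z c y1 y2; apply: S_lin_ext => x' v; apply: sumZ_ext => t.
    by rewrite mulrDl -scalerAl P2.
  - by move=> x y c z1 z2; apply: S_lin_ext => x' v; apply: sumZ_ext => t; exact: (P3 _ _ [::]).
apply: eq_bigr => p _; congr (_ *: _).
rewrite -(S_sum (D p.2.1) (fun r x v => \sum_(t <- D x) t.1 *: phi (r.1 * t.2.1) (r.2 * t.2.2) (p.2.2 :: v))).
apply: S_ext => x v.
rewrite (D_mulS (h := fun al be => phi al be (p.2.2 :: v))) //.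
Qed.

End Main.

Lemma feval_idDT (k : comPzRingType) (A : comAlgType k) (D : A -> fsum k (A * A))
  (P : lmodType k) (f : seq (seq A) -> P) X :
  feval f (id_DeltaT D X) = \sum_(q <- X) q.1 *: (match q.2 with
    | [:: u; v] => feval f [seq (r.1, u :: r.2) | r <- DeltaT D v] | _ => 0 end).
Proof.
rewrite /id_DeltaT /feval big_flatten big_map; apply: eq_bigr => -[c ws] _ /=.
case: ws => [|u [|v [|? ?]]] /=; rewrite ?scaler0 ?big_nil //.
by rewrite !big_map scaler_sumr; apply: eq_bigr => r _; rewrite scalerA.
Qed.

Lemma feval_DTid (k : comPzRingType) (A : comAlgType k) (D : A -> fsum k (A * A))
  (P : lmodType k) (f : seq (seq A) -> P) X :
  feval f (DeltaT_id D X) = \sum_(q <- X) q.1 *: (match q.2 with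
    | [:: u; v] => feval f [seq (r.1, rcons r.2 v) | r <- DeltaT D u] | _ => 0 end).
Proof.
rewrite /DeltaT_id /feval big_flatten big_map; apply: eq_bigr => -[c ws] _ /=.
case: ws => [|u [|v [|? ?]]] /=; rewrite ?scaler0 ?big_nil //.
by rewrite !big_map scaler_sumr; apply: eq_bigr => r _; rewrite scalerA.
Qed.

Theorem proposition3p6 (k : comPzRingType) (A : comAlgType k)
    (eps : A -> k) (D : A -> fsum k (A * A)) :
  left_counital_bialgebra eps D ->
  forall x : fsum k (seq A), all (fun p => p.2 != [::]) x ->
    teq (id_DeltaT D (DeltaTS D x)) (DeltaT_id D (DeltaTS D x)).
Proof.
move=> HB x Hx P f Hf.
pose phi := fun (a b : A) (v : seq A) => f [:: [:: a]; [:: b]; v].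
have Gphi : good3 phi.
  split.
  - by move=> y v c x1 x2; exact: (Hf [::] [:: [:: y]; v] [::] [::]).
  - by move=> x0 v c y1 y2; exact: (Hf [:: [:: x0]] [:: v] [::] [::]).
  - by move=> x0 y u v c a b; exact: (Hf [:: [:: x0]; [:: y]] [::] u v).
rewrite /DeltaTS feval_idDT feval_DTid !big_flatten !big_map.
apply: eq_big_seq => p Hp.
have Hp2 : p.2 != [::] by exact: (allP Hx p Hp).
rewrite /fscale !big_map DeltaT_emb /emb !big_map.
transitivity (p.1 *: Lr D phi p.2).
  rewrite /Lr /S scaler_sumr; apply: eq_bigr => q _ /=; rewrite -scalerA; congr (_ *: _).
  by rewrite DeltaT_emb /feval /emb !big_map.
rewrite (Main HB Hp2 Gphi) /Rr /S scaler_sumr; apply: eq_bigr => q _ /=; rewrite -scalerA; congr (_ *: _).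
by rewrite /feval /tw2 !big_map.
Qed.
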